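(* In the two-asset bid-ask model described in the context, condition (NA2) holds if and only if, for all $t\le T-1$, $$\operatorname{ess\,sup}_{\mathcal{F}_t}S^a_{t+1}\ge S^a_t\quad\text{and}\quad S^b_t\ge\operatorname{ess\,inf}_{\mathcal{F}_t}S^b_{t+1}\quad\text{a.s.}$$
   Context: $(\Omega,\mathcal{F},(\mathcal{F}_t)_{t=0,\dots,T},\mathbb{P})$ filtered complete probability space, $\mathcal{F}_0$ trivial. $d=2$. For each $t$, $S^b_t,S^a_t$ are $\mathcal{F}_t$-measurable random variables with $0<S^b_t\le S^a_t$ a.s., and the solvency cone is $\mathbf{K}_t=\{x\in\mathbb{R}^2:\ x_1+y\,x_2\ge0\ \text{for all }y\in[S^b_t,S^a_t]\}$ (the cone generated by $S^a_te_1-e_2$ and $-S^b_te_1+e_2$). $L^0(\Gamma,\mathcal{F}_t)$: $\mathcal{F}_t$-measurable random vectors a.s. in $\Gamma$. $\mathsf{A}_{t,T}=\sum_{u=t}^TL^0(-\mathbf{K}_u,\mathcal{F}_u)$. (NA2): for every $t$ and $\eta_t\in L^0(\mathbb{R}^2,\mathcal{F}_t)$, if $(\eta_t+\mathsf{A}_{t,T})\cap L^0(\mathbf{K}_T,\mathcal{F}_T)\neq\emptyset$ then $\eta_t\in L^0(\mathbf{K}_t,\mathcal{F}_t)$. $\operatorname{ess\,sup}_{\mathcal{F}_t}$ and $\operatorname{ess\,inf}_{\mathcal{F}_t}$ denote the conditional essential supremum/infimum: the smallest (resp. largest) $\mathcal{F}_t$-measurable extended random variable a.s. dominating (resp. dominated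 by) the given variable. *)

(* Defs.v *)
From HB Require Import structures.
From mathcomp Require Import all_boot all_order all_algebra.
From mathcomp Require Import all_classical all_reals all_analysis.
From mathcomp Require Import measurable_realfun.
Set Implicit Arguments. Unset Strict Implicit. Unset Printing Implicit Defensive.
Import Order.TTheory GRing.Theory Num.Theory.
Local Open Scope classical_set_scope.
Local Open Scope ring_scope.

Section defs.
Context {d : measure_display} {Omega : measurableType d} {R : realType}.
Variable P : probability Omega R.

Definition Gmeas {dY} {Y : measurableType dY} (G : set (set Omega)) (f : Omega -> Y) :=
  forall B : set Y, measurable B -> G (f @^-1` B).

Definition Gmeas2 (G : set (set Omega)) (f : Omega -> R * R) :=
  Gmeas G (fun w => (f w).1) /\ Gmeas G (fun w => (f w).2).

Definition is_filtration (F : nat -> set (set Omega)) (N : nat) :=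
  (forall t, (t <= N)%N -> sigma_algebra setT (F t)) /\
  (forall t, (t <= N)%N -> F t `<=` measurable) /\
  (forall s t, (s <= t)%N -> (t <= N)%N -> F s `<=` F t).

Definition P_complete :=
  forall (Nn A : set Omega), measurable Nn -> P Nn = 0%E -> A `<=` Nn -> measurable A.

Definition trivial_sigma (G : set (set Omega)) :=
  forall A, G A -> P A = 0%E \/ P A = 1%E.

Definition inK (sb sa : R) (x : R * R) :=
  forall y : R, sb <= y <= sa -> 0 <= x.1 + y * x.2.

Definition L0K (F : nat -> set (set Omega)) (Sb Sa : nat -> Omega -> R) (t : nat)
    (X : Omega -> R * R) :=
  Gmeas2 (F t) X /\ {ae P, forall w, inK (Sb t w) (Sa t w) (X w)}.

Definition L0mK (F : nat -> set (set Omega)) (Sb Sa : nat -> Omega -> R) (t : nat)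
    (X : Omega -> R * R) :=
  Gmeas2 (F t) X /\ {ae P, forall w, inK (Sb t w) (Sa t w) (- (X w).1, - (X w).2)}.

(* eta + A_{t,N} meets L^0(K_N, F_N) *)
Definition meets_solvent (F : nat -> set (set Omega)) (Sb Sa : nat -> Omega -> R)
    (N t : nat) (eta : Omega -> R * R) :=
  exists xi : nat -> Omega -> R * R,
    (forall u, (t <= u)%N -> (u <= N)%N -> L0mK F Sb Sa u (xi u)) /\
    L0K F Sb Sa N (fun w => ((eta w).1 + \sum_(t <= u < N.+1) (xi u w).1,
                             (eta w).2 + \sum_(t <= u < N.+1) (xi u w).2)).

Definition NA2 (F : nat -> set (set Omega)) (Sb Sa : nat -> Omega -> R) (N : nat) :=
  forall t, (t <= N)%N -> forall eta : Omega -> R * R, Gmeas2 (F t) eta ->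
    meets_solvent F Sb Sa N t eta -> L0K F Sb Sa t eta.

Definition is_cond_ess_sup (G : set (set Omega)) (X : Omega -> R) (Y : Omega -> \bar R) :=
  Gmeas G Y /\ {ae P, forall w, ((X w)%:E <= Y w)%E} /\
  (forall Z : Omega -> \bar R, Gmeas G Z -> {ae P, forall w, ((X w)%:E <= Z w)%E} ->
     {ae P, forall w, (Y w <= Z w)%E}).

Definition is_cond_ess_inf (G : set (set Omega)) (X : Omega -> R) (Y : Omega -> \bar R) :=
  Gmeas G Y /\ {ae P, forall w, (Y w <= (X w)%:E)%E} /\
  (forall Z : Omega -> \bar R, Gmeas G Z -> {ae P, forall w, (Z w <= (X w)%:E)%E} ->
     {ae P, forall w, (Z w <= Y w)%E}).

End defs.

(* Main.v *)
Require Import Defs.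
From HB Require Import structures.
From mathcomp Require Import all_boot all_order all_algebra.
From mathcomp Require Import all_classical all_reals all_analysis.
From mathcomp Require Import measurable_realfun.
From mathcomp Require Import lra zify.
Import Order.TTheory GRing.Theory Num.Theory.
Local Open Scope classical_set_scope.
Local Open Scope ring_scope.
Set Implicit Arguments. Unset Strict Implicit. Unset Printing Implicit Defensive.

Lemma measurable_mem d (T : measurableType d) (B : set T) :
  measurable B -> measurable_fun setT (fun w => w \in B).
Proof.
move=> mB _ S mS; rewrite setTI.
have [St|nSt] := pselect (S true); have [Sf|nSf] := pselect (S false).
- rewrite (_ : _ @^-1` _ = setT) //; apply/seteqP; split => // w _ /=.
  by case: (w \in B).
- rewrite (_ : _ @^-1` _ = B) //; apply/seteqP; split => w /=.
  + by case: (boolP (w \in B)) => [/set_mem //|_ /nSf].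
  + by move=> Bw; rewrite mem_set.
- rewrite (_ : _ @^-1` _ = ~` B); first exact: measurableC.
  apply/seteqP; split => w /=.
  + by case: (boolP (w \in B)) => [_ /nSt //|/negP wB _ /mem_set].
  + by move=> Bw; rewrite memNset.
- rewrite (_ : _ @^-1` _ = set0) //; apply/seteqP; split => // w /=.
  by case: (w \in B).
Qed.

Section helpers.
Context {d : measure_display} {Omega : measurableType d} {R : realType}.
Variable P : probability Omega R.

Lemma GmeasP (G : set (set Omega)) (sG : sigma_algebra setT G) dY (Y : measurableType dY) (f : Omega -> Y) :
  Gmeas G f <-> measurable_fun (setT : set (g_sigma_algebraType G)) (f : g_sigma_algebraType G -> Y).
Proof.
rewrite /Gmeas /measurable_fun; split => H.
- move=> _ B mB; rewrite setTI (measurable_g_measurableTypeE sG); exact: H.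
- move=> B mB; have := H measurableT B mB; rewrite setTI (measurable_g_measurableTypeE sG). done.
Qed.

Lemma GmeasE (G : set (set Omega)) (sG : sigma_algebra setT G) :
  (measurable : set (set (g_sigma_algebraType G))) = G.
Proof. exact: measurable_g_measurableTypeE. Qed.

Lemma aeE (Q : Omega -> Prop) : {ae P, forall w, Q w} <-> P.-negligible (~` [set w | Q w]).
Proof. by []. Qed.

Lemma ae_count (I : countType) (Q : I -> Omega -> Prop) :
  (forall i, {ae P, forall w, Q i w}) -> {ae P, forall w, forall i, Q i w}.
Proof.
move=> H; apply/aeE.
have : P.-negligible (\bigcup_n (if @unpickle I n is Some i then ~` [set w | Q i w] else set0)).
  apply: negligible_bigcup => n; case: (unpickle n) => [i|]; [exact/aeE/H | exact: negligible_set0].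
apply: negligibleS => w /= /existsNP [i Hi].
by exists (pickle i) => //; rewrite pickleK.
Qed.

Lemma ae_mono (Q1 Q2 : Omega -> Prop) : (forall w, Q1 w -> Q2 w) ->
  {ae P, forall w, Q1 w} -> {ae P, forall w, Q2 w}.
Proof. by move=> H; apply: filterS. Qed.

Lemma ae_mono2 (Q1 Q2 Q3 : Omega -> Prop) : (forall w, Q1 w -> Q2 w -> Q3 w) ->
  {ae P, forall w, Q1 w} -> {ae P, forall w, Q2 w} -> {ae P, forall w, Q3 w}.
Proof. by move=> H; apply: filterS2. Qed.

Lemma ae_all (Q : Omega -> Prop) : (forall w, Q w) -> {ae P, forall w, Q w}.
Proof. exact: aeW. Qed.


Lemma hull (G : set (set Omega)) (sG : sigma_algebra setT G) (GM : G `<=` measurable)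
  (A : set Omega) (mA : measurable A) :
  exists B, G B /\ P.-negligible (A `\` B) /\
    (forall C, G C -> P.-negligible (A `\` C) -> P.-negligible (B `\` C)).
Proof.
pose Cl := [set B | G B /\ P.-negligible (A `\` B)].
pose m := ereal_inf (P @` Cl).
have m0 : (0 <= m)%E.
  by apply/ereal_infP => _ [B _ <-]; exact: measure_ge0.
have ClT : Cl setT.
  rewrite /Cl /=; split; first by rewrite -(GmeasE sG); exact: measurableT.
  by rewrite setDT; exact: negligible_set0.
have m1 : (m <= 1)%E.
  by rewrite /m -(probability_setT P); apply: ereal_inf_lbound; exists setT.
have mfin : m \is a fin_num by rewrite ge0_fin_numE // (le_lt_trans m1) // ltry.
have : forall n : nat, exists B, Cl B /\ (P B < m + (n.+1%:R^-1)%:E)%E.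
  move=> n; have [_ [B ClB <-] HB] := @lb_ereal_inf_adherent _ (P @` Cl) (n.+1%:R^-1) ltac:(by rewrite invr_gt0) mfin.
  by exists B.
move=> /choice [Bn HBn].
have GI : forall B C, G B -> G C -> G (B `&` C).
  by move=> B C; rewrite -(GmeasE sG) => ? ?; exact: measurableI.
pose B := \bigcap_n Bn n.
have GB : G B.
  rewrite -(GmeasE sG); apply: bigcapT_measurable => n; rewrite (GmeasE sG).
  by case: (HBn n) => -[].
have nAB : P.-negligible (A `\` B).
  apply: (@negligibleS _ _ _ _ (\bigcup_n (A `\` Bn n))).
    move=> w [Aw nB]; have [n Hn] : exists n, ~ Bn n w.
      by apply/existsNP => H; apply: nB => n _; exact: H.
    by exists n.
  by apply: negligible_bigcup => n; case: (HBn n) => -[].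
have ClB : Cl B by rewrite /Cl /=.
have PBm : (P B <= m)%E.
  apply/lee_addgt0Pr => e e0.
  have [k Hk] := @ltr_add_invr R 0 e ltac:(by []).
  rewrite add0r in Hk.
  apply: (le_trans (y := P (Bn k))).
    by apply: le_measure; rewrite ?inE; [exact: GM|case: (HBn k) => -[] /GM|move=> w; apply].
  apply/ltW/(lt_le_trans (proj2 (HBn k))).
  by rewrite leeD2l // lee_fin ltW.
exists B; split => //; split => // C GC nAC.
have ClBC : Cl (B `&` C).
  rewrite /Cl /=; split; first exact: GI.
  apply: (@negligibleS _ _ _ _ ((A `\` B) `|` (A `\` C))); last exact: negligibleU.
  by move=> w [Aw /not_andP [nB|nC]]; [left|right].
have mBC : (m <= P (B `&` C))%E by apply: ereal_inf_lbound; exists (B `&` C).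
apply/negligibleP; first by apply: measurableD; exact: GM.
apply/eqP; rewrite eq_le measure_ge0 andbT.
rewrite measureD; [|exact: GM|exact: GM|].
  by rewrite sube_le0 (le_trans PBm).
by rewrite (le_lt_trans (probability_le1 P _)) ?ltry //; exact: GM.
Qed.

Lemma rat_between (x y : \bar R) : (x < y)%E -> exists q : rat, (x < (ratr q)%:E)%E /\ ((ratr q)%:E < y)%E.
Proof.
case: x => [r| |]; case: y => [s| |] //=; rewrite ?lte_fin.
- move=> rs; have [q] := rat_in_itvoo rs; rewrite in_itv /= => /andP[a b].
  by exists q; rewrite !lte_fin.
- move=> _; have [q] := @rat_in_itvoo R r (r + 1) ltac:(by rewrite ltrDl).
  rewrite in_itv /= => /andP[a b]; by exists q; rewrite lte_fin ltry.
- move=> _; have [q] := @rat_in_itvoo R (s - 1) s ltac:(by rewrite ltrBlDr ltrDl).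
  rewrite in_itv /= => /andP[a b]; by exists q; rewrite lte_fin ltNyr.
- by move=> _; exists 0; rewrite ltNyr ltry.
Qed.

Lemma ess_sup_ex (G : set (set Omega)) (sG : sigma_algebra setT G) (GM : G `<=` measurable)
  (X : Omega -> R) (mX : Gmeas measurable X) : exists Y, is_cond_ess_sup P G X Y.
Proof.
pose q n : rat := odflt 0 (@unpickle rat n).
pose A n := [set w | ratr (q n) < X w].
have mA n : measurable (A n).
  rewrite (_ : A n = X @^-1` `]ratr (q n), +oo[); first by apply: mX; exact: measurable_itv.
  by apply/seteqP; split => w /=; rewrite in_itv /= andbT.
have /choice [Bn HB] := fun n => hull sG GM (mA n).
pose h n w : \bar R := if w \in Bn n then +oo%E else (ratr (q n))%:E.
pose Y w := einfs (fun n => h n w) 0.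
have Ylb : forall w n, (Y w <= h n w)%E.
  by move=> w n; apply: ereal_inf_lbound; exists n.
have Ylt : forall w x, (Y w < x)%E -> exists n, (h n w < x)%E.
  by move=> w x /ereal_inf_lt [_ [n _ <-] hx]; exists n.
exists Y; split; [|split].
- apply/(GmeasP sG); apply: (@measurable_fun_einfs _ (g_sigma_algebraType G) R setT h _ 0) => n.
  apply: measurable_fun_ifT; [|exact: measurable_cst|exact: measurable_cst].
  by apply: measurable_mem; rewrite (GmeasE sG); case: (HB n).
- apply/aeE; apply: (@negligibleS _ _ _ _ (\bigcup_n (A n `\` Bn n))).
    move=> w /= /negP; rewrite -ltNge => /Ylt [n]; rewrite /h.
    case: ifP => [_|/negbT nB]; first by rewrite ltNge leey.
    rewrite lte_fin => qX; exists n => //; split => //.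
    by move=> Bw; move/negP: nB; apply; rewrite in_setE.
  by apply: negligible_bigcup => n; case: (HB n) => _ [].
- move=> Z mZ XZ.
  pose C n := [set w | ((ratr (q n))%:E < Z w)%E].
  have GC n : G (C n).
    rewrite (_ : C n = Z @^-1` `](ratr (q n))%:E, +oo[%classic); first by apply: mZ; exact: emeasurable_itv.
    by apply/seteqP; split => w /=; rewrite in_itv /= andbT.
  have nBC n : P.-negligible (Bn n `\` C n).
    case: (HB n) => _ [_]; apply => //.
    move/aeE: XZ; apply: negligibleS => w [/= qX nqZ] XZw; apply: nqZ.
    by apply: (lt_le_trans _ XZw); rewrite lte_fin.
  apply/aeE; apply: (@negligibleS _ _ _ _ (\bigcup_n (Bn n `\` C n))); last exact: negligible_bigcup.
  move=> w /= /negP; rewrite -ltNge => /rat_between [q0 [Zq qY]].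
  exists (pickle q0) => //; rewrite /C /= /q pickleK /=; split; last by rewrite ltNge (ltW Zq).
  have := lt_le_trans qY (Ylb w (pickle q0)); rewrite /h /q pickleK /=.
  by case: ifP => [/set_mem //|]; rewrite ltxx.
Qed.

Lemma Gmeas_comp dY (Y : measurableType dY) dZ (Z : measurableType dZ) (G : set (set Omega))
  (f : Omega -> Y) (g : Y -> Z) : Gmeas G f -> measurable_fun setT g -> Gmeas G (fun w => g (f w)).
Proof.
move=> Gf mg B mB; have := mg measurableT B mB; rewrite setTI => /Gf.
by [].
Qed.

Lemma ess_inf_ex (G : set (set Omega)) (sG : sigma_algebra setT G) (GM : G `<=` measurable)
  (X : Omega -> R) (mX : Gmeas measurable X) : exists Z, is_cond_ess_inf P G X Z.
Proof.
have mNX : Gmeas measurable (fun w => - X w) by apply: Gmeas_comp => //; exact: oppr_measurable.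
have [Y [mY [XY minY]]] := ess_sup_ex sG GM mNX.
exists (fun w => - Y w)%E; split; [|split].
- by apply: Gmeas_comp => //; exact: oppe_measurable.
- by apply: ae_mono XY => w; rewrite EFinN leeNl.
- move=> Z mZ ZX.
  have : {ae P, forall w, (Y w <= - Z w)%E}.
    apply: minY; first by apply: Gmeas_comp => //; exact: oppe_measurable.
    by apply: ae_mono ZX => w; rewrite EFinN leeN2.
  by apply: ae_mono => w; rewrite leeNr.
Qed.

Lemma one_step (G : set (set Omega)) (sG : sigma_algebra setT G) (sb sa sb' sa' : Omega -> R)
  (Y Z : Omega -> \bar R)
  (hY : is_cond_ess_sup P G sa' Y) (hYa : {ae P, forall w, ((sa w)%:E <= Y w)%E})
  (hZ : is_cond_ess_inf P G sb' Z) (hZb : {ae P, forall w, (Z w <= (sb w)%:E)%E})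
  (h' : {ae P, forall w, sb' w <= sa' w}) (z1 z2 : Omega -> R)
  (m1 : Gmeas G z1) (m2 : Gmeas G z2)
  (Kz : {ae P, forall w, inK (sb' w) (sa' w) (z1 w, z2 w)}) :
  {ae P, forall w, inK (sb w) (sa w) (z1 w, z2 w)}.
Proof.
move/(GmeasP sG): m1 => m1; move/(GmeasP sG): m2 => m2.
have Klow : {ae P, forall w, 0 <= z1 w + sb' w * z2 w /\ 0 <= z1 w + sa' w * z2 w}.
  by apply: ae_mono2 Kz h' => w Kw hw; split; apply: Kw; rewrite hw ?lexx.
have mlin : forall r : R, measurable_fun (setT : set (g_sigma_algebraType G)) (fun w => z1 w + r * z2 w).
  by move=> r; apply: measurable_funD => //; apply: measurable_funM => //; exact: measurable_cst.
have Hb : forall q : rat, {ae P, forall w, 0 < z2 w -> z1 w + ratr q * z2 w < 0 -> ratr q <= sb w}.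
  move=> q; pose W : Omega -> \bar R := fun w => if 0 < z2 w then (if z1 w + ratr q * z2 w < 0 then (ratr q)%:E else -oo%E) else -oo%E.
  have mW : Gmeas G W.
    apply/(GmeasP sG); apply: measurable_fun_ifT; [|apply: measurable_fun_ifT; [|exact: measurable_cst|exact: measurable_cst]|exact: measurable_cst].
    - exact: (measurable_fun_ltr (T := g_sigma_algebraType G) (D := setT) (f := cst 0) (g := z2) (measurable_cst _) m2).
    - exact: (measurable_fun_ltr (T := g_sigma_algebraType G) (D := setT) (f := fun w => z1 w + ratr q * z2 w) (g := cst 0) (mlin _) (measurable_cst _)).
  have WZ : {ae P, forall w, (W w <= Z w)%E}.
    case: hZ => _ [_]; apply => //.
    apply: ae_mono Klow => w [H1 _]; rewrite /W; case: ifP => pz; [case: ifP => neg|]; rewrite ?leNye // lee_fin.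
    by nra.
  apply: ae_mono2 WZ hZb => w WZw Zb pz neg; have := le_trans WZw Zb.
  by rewrite /W pz neg lee_fin.
have Ha : forall q : rat, {ae P, forall w, z2 w < 0 -> z1 w + ratr q * z2 w < 0 -> sa w <= ratr q}.
  move=> q; pose W : Omega -> \bar R := fun w => if z2 w < 0 then (if z1 w + ratr q * z2 w < 0 then (ratr q)%:E else +oo%E) else +oo%E.
  have mW : Gmeas G W.
    apply/(GmeasP sG); apply: measurable_fun_ifT; [|apply: measurable_fun_ifT; [|exact: measurable_cst|exact: measurable_cst]|exact: measurable_cst].
    - exact: (measurable_fun_ltr (T := g_sigma_algebraType G) (D := setT) (f := z2) (g := cst 0) m2 (measurable_cst _)).
    - exact: (measurable_fun_ltr (T := g_sigma_algebraType G) (D := setT) (f := fun w => z1 w + ratr q * z2 w) (g := cst 0) (mlin _) (measurable_cst _)).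
  have YW : {ae P, forall w, (Y w <= W w)%E}.
    case: hY => _ [_]; apply => //.
    apply: ae_mono Klow => w [_ H1]; rewrite /W; case: ifP => pz; [case: ifP => neg|]; rewrite ?leey // lee_fin.
    by nra.
  apply: ae_mono2 YW hYa => w YWw aY pz neg; have := le_trans aY YWw.
  by rewrite /W pz neg lee_fin.
have Hb' := ae_count Hb; have Ha' := ae_count Ha.
apply: (ae_mono2 _ (ae_mono2 (fun w (a : forall q : rat, _) (b : forall q : rat, _) => conj a b) Hb' Ha') Klow).
move=> w [Hbw Haw] [K1 K2] y /andP[yb ya] /=.
case: (ltrgt0P (z2 w)) => [pz|nz|z0].
- have : 0 <= z1 w + sb w * z2 w.
    rewrite leNgt; apply/negP => c.
    pose e := - (z1 w + sb w * z2 w) / z2 w.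
    have e0 : sb w < sb w + e by rewrite ltrDl divr_gt0 // oppr_gt0.
    have [q] := rat_in_itvoo e0; rewrite in_itv /= => /andP[q1 q2].
    rewrite -ltrBlDl ltr_pdivlMr // in q2.
    have := Hbw q pz ltac:(nra); lra.
  by nra.
- have : 0 <= z1 w + sa w * z2 w.
    rewrite leNgt; apply/negP => c.
    pose e := - (z1 w + sa w * z2 w) / - z2 w.
    have e0 : sa w - e < sa w by rewrite ltrBlDr ltrDl divr_gt0 // oppr_gt0.
    have [q] := rat_in_itvoo e0; rewrite in_itv /= => /andP[q1 q2].
    have h : sa w - ratr q < e by lra.
    rewrite ltr_pdivlMr ?oppr_gt0 // in h.
    have := Haw q nz ltac:(nra); lra.
  by nra.
- by nra.
Qed.
End helpers.

Section S2.
Context {d : measure_display} {Omega : measurableType d} {R : realType}.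
Variable P : probability Omega R.
Lemma Gmeas_mono dY (Y : measurableType dY) (G G' : set (set Omega)) (f : Omega -> Y) :
  G `<=` G' -> Gmeas G f -> Gmeas G' f.
Proof. by move=> GG' Gf B mB; apply: GG'; exact: Gf. Qed.

Lemma Gmeas_cst dY (Y : measurableType dY) (G : set (set Omega)) (sG : sigma_algebra setT G) (c : Y) :
  Gmeas G (fun _ => c).
Proof. by apply/(GmeasP sG); exact: measurable_cst. Qed.

Lemma sum_meas (G : set (set Omega)) (sG : sigma_algebra setT G) (f : nat -> Omega -> R) t k :
  (forall u, (t <= u < k)%N -> Gmeas G (f u)) -> Gmeas G (fun w => \sum_(t <= u < k) f u w).
Proof.
elim: k => [|k IH] H.
  have -> : (fun w => \sum_(t <= u < 0) f u w) = fun _ => 0 by apply/funext => w; rewrite big_geq.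
  exact: Gmeas_cst.
case: (leqP t k) => tk.
- have -> : (fun w => \sum_(t <= u < k.+1) f u w) = (fun w => \sum_(t <= u < k) f u w + f k w).
    by apply/funext => w; rewrite big_nat_recr.
  apply/(GmeasP sG); apply: measurable_funD; apply/(GmeasP sG).
  + by apply: IH => u /andP[a b]; apply: H; rewrite a ltnS ltnW.
  + by apply: H; rewrite tk ltnSn.
- have -> : (fun w => \sum_(t <= u < k.+1) f u w) = fun _ => 0 by apply/funext => w; rewrite big_geq.
  exact: Gmeas_cst.
Qed.

Lemma sum_one (g : nat -> R) t N : (t < N)%N -> (forall u, u != t.+1 -> g u = 0) ->
  \sum_(t <= u < N.+1) g u = g t.+1.
Proof.
move=> tN H.
rewrite big_ltn; last by rewrite ltnS ltnW.
rewrite big_ltn; last by rewrite ltnS.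
rewrite H ?ltn_eqF // add0r.
rewrite big_nat big1 ?addr0 // => u /andP[hu _]; apply: H; by rewrite gtn_eqF.
Qed.

Lemma inK_sub sb sa (x1 x2 y1 y2 : R) : inK sb sa (x1, x2) -> inK sb sa (- y1, - y2) ->
  inK sb sa (x1 - y1, x2 - y2).
Proof. move=> Hx Hy y hy; have := Hx y hy; have := Hy y hy => /=. lra. Qed.

Lemma Gmeas_ext dY (Y : measurableType dY) (G : set (set Omega)) (f g : Omega -> Y) :
  (forall w, f w = g w) -> Gmeas G g -> Gmeas G f.
Proof. by move=> fg; rewrite (_ : f = g) //; apply/funext. Qed.

Lemma NA2_step (F : nat -> set (set Omega)) (Sb Sa : nat -> Omega -> R) N
  (hF : is_filtration F N) (NA : NA2 P F Sb Sa N) t (tN : (t < N)%N) (e1 e2 : Omega -> R)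
  (m1 : Gmeas (F t) e1) (m2 : Gmeas (F t) e2)
  (K1 : {ae P, forall w, inK (Sb t.+1 w) (Sa t.+1 w) (e1 w, e2 w)}) :
  {ae P, forall w, inK (Sb t w) (Sa t w) (e1 w, e2 w)}.
Proof.
case: hF => [sF [FM Fmono]].
have := NA t (ltnW tN) (fun w => (e1 w, e2 w)) (conj m1 m2).
suff MS : meets_solvent P F Sb Sa N t (fun w => (e1 w, e2 w)) by move=> /(_ MS) [].
pose xi u w := if u == t.+1 then (- e1 w, - e2 w) else (0, 0).
have E : forall w, e1 w + \sum_(t <= u < N.+1) (xi u w).1 = 0 /\
                   e2 w + \sum_(t <= u < N.+1) (xi u w).2 = 0.
  move=> w; rewrite !(@sum_one _ t N) // /xi ?eqxx /= ?subrr //;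
    by move=> u /negbTE hu; rewrite hu.
exists xi; split.
- move=> u tu uN; rewrite /L0mK /xi; case: eqP => [->|_] /=.
  + have FF : F t `<=` F t.+1 by apply: Fmono => //.
    split; first by split; apply: (Gmeas_mono FF);
      [exact: (Gmeas_comp m1 (@oppr_measurable R setT))|exact: (Gmeas_comp m2 (@oppr_measurable R setT))].
    by apply: ae_mono K1 => w Kw y hy /=; rewrite !opprK; exact: Kw.
  + split; first by split; exact: (@Gmeas_cst _ R (F u) (sF u uN) 0).
    by apply: ae_all => w y _ /=; rewrite oppr0 mulr0 addr0.
- split; first split.
  + apply: (@Gmeas_ext _ R (F N) _ (fun _ => 0)); first by move=> w /=; case: (E w).
    exact: (@Gmeas_cst _ R (F N) (sF N (leqnn N)) 0).
  + apply: (@Gmeas_ext _ R (F N) _ (fun _ => 0)); first by move=> w /=; case: (E w).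
    exact: (@Gmeas_cst _ R (F N) (sF N (leqnn N)) 0).
  + by apply: ae_all => w y _ /=; case: (E w) => -> ->; rewrite mulr0 addr0.
Qed.

Lemma dir1 (F : nat -> set (set Omega)) (Sb Sa : nat -> Omega -> R) N
  (hF : is_filtration F N)
  (hS : forall t, (t <= N)%N -> Gmeas (F t) (Sb t) /\ Gmeas (F t) (Sa t))
  (hpos : forall t, (t <= N)%N -> {ae P, forall w, 0 < Sb t w <= Sa t w})
  (NA : NA2 P F Sb Sa N) t (tN : (t < N)%N) :
  (exists Y, is_cond_ess_sup P (F t) (Sa t.+1) Y /\
                {ae P, forall w, ((Sa t w)%:E <= Y w)%E}) /\
  (exists Z, is_cond_ess_inf P (F t) (Sb t.+1) Z /\
                {ae P, forall w, (Z w <= (Sb t w)%:E)%E}).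
Proof.
have hF' := hF; case: hF' => [sF [FM Fmono]].
have sFt := sF t (ltnW tN).
have [mSbt mSat] := hS t (ltnW tN).
have [mSb1 mSa1] := hS t.+1 tN.
move/(GmeasP sFt): (mSbt) => mSbt'; move/(GmeasP sFt): (mSat) => mSat'.
split.
- have mX : Gmeas measurable (Sa t.+1) := Gmeas_mono (FM _ tN) mSa1.
  have [Y [mY [XY minY]]] := ess_sup_ex P sFt (FM t (ltnW tN)) mX.
  exists Y; split; first by [].
  move/(GmeasP sFt): (mY) => mY'.
  pose c w := (Y w < (Sa t w)%:E)%E.
  pose c' w := (-oo < Y w)%E.
  pose e1 w : R := if c w then (if c' w then fine (Y w) else 0) else 0.
  pose e2 w : R := if c w then (if c' w then -1 else 0) else 0.
  have mc : measurable_fun (setT : set (g_sigma_algebraType (F t))) c.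
    apply: measurable_fun_lte => //.
    by apply: measurableT_comp => //; exact: EFin_measurable.
  have mc' : measurable_fun (setT : set (g_sigma_algebraType (F t))) c'.
    exact: (measurable_fun_lte (T := g_sigma_algebraType (F t)) (D := setT) (f := fun _ => -oo%E) (g := Y) (measurable_cst _) mY').
  have m1 : Gmeas (F t) e1.
    apply/(GmeasP sFt); rewrite /e1.
    exact: (measurable_fun_ifT mc (measurable_fun_ifT mc' (measurableT_comp (fine_measurable measurableT) mY') (measurable_cst _)) (measurable_cst _)).
  have m2 : Gmeas (F t) e2.
    apply/(GmeasP sFt); rewrite /e2.
    exact: (measurable_fun_ifT mc (measurable_fun_ifT mc' (measurable_cst _) (measurable_cst _)) (measurable_cst _)).
  have K1 : {ae P, forall w, inK (Sb t.+1 w) (Sa t.+1 w) (e1 w, e2 w)}.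
    apply: ae_mono XY => w Xw y /andP[_ hy] /=; rewrite /e1 /e2.
    case: ifP => cw; [case: ifP => cw'|]; rewrite ?mulr0 ?addr0 //.
    move: cw cw' Xw; rewrite /c /c'; case: (Y w) => [r| |] //= _ _.
    by rewrite lee_fin => hr; lra.
  have K0 := NA2_step hF NA tN m1 m2 K1.
  apply: ae_mono2 (ae_mono2 (fun w a b => conj a b) K0 XY) (hpos t (ltnW tN)).
  move=> w [Kw Xw] /andP[_ hba].
  rewrite leNgt; apply/negP => cw.
  have := Kw (Sa t w) ltac:(by rewrite hba lexx).
  rewrite /e1 /e2 /c /c' cw /=.
  move: cw Xw; case: (Y w) => [r| |] //=.
  + by rewrite lte_fin ltNyr /= => hr _ h; lra.
- have mX : Gmeas measurable (Sb t.+1) := Gmeas_mono (FM _ tN) mSb1.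
  have [Z [mZ [ZX minZ]]] := ess_inf_ex P sFt (FM t (ltnW tN)) mX.
  exists Z; split; first by [].
  move/(GmeasP sFt): (mZ) => mZ'.
  pose c w := ((Sb t w)%:E < Z w)%E.
  pose c' w := (Z w < +oo)%E.
  pose e1 w : R := if c w then (if c' w then - fine (Z w) else 0) else 0.
  pose e2 w : R := if c w then (if c' w then 1 else 0) else 0.
  have mc : measurable_fun (setT : set (g_sigma_algebraType (F t))) c.
    apply: measurable_fun_lte => //.
    by apply: measurableT_comp => //; exact: EFin_measurable.
  have mc' : measurable_fun (setT : set (g_sigma_algebraType (F t))) c'.
    exact: (measurable_fun_lte (T := g_sigma_algebraType (F t)) (D := setT) (f := Z) (g := fun _ => +oo%E) mZ' (measurable_cst _)).
  have m1 : Gmeas (F t) e1.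
    apply/(GmeasP sFt); rewrite /e1.
    exact: (measurable_fun_ifT mc (measurable_fun_ifT mc' (measurableT_comp (@oppr_measurable R setT) (measurableT_comp (fine_measurable measurableT) mZ')) (measurable_cst _)) (measurable_cst _)).
  have m2 : Gmeas (F t) e2.
    apply/(GmeasP sFt); rewrite /e2.
    exact: (measurable_fun_ifT mc (measurable_fun_ifT mc' (measurable_cst _) (measurable_cst _)) (measurable_cst _)).
  have K1 : {ae P, forall w, inK (Sb t.+1 w) (Sa t.+1 w) (e1 w, e2 w)}.
    apply: ae_mono ZX => w Xw y /andP[hy _] /=; rewrite /e1 /e2.
    case: ifP => cw; [case: ifP => cw'|]; rewrite ?mulr0 ?addr0 //.
    move: cw cw' Xw; rewrite /c /c'; case: (Z w) => [r| |] //= _ _.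
    by rewrite lee_fin => hr; lra.
  have K0 := NA2_step hF NA tN m1 m2 K1.
  apply: ae_mono2 (ae_mono2 (fun w a b => conj a b) K0 ZX) (hpos t (ltnW tN)).
  move=> w [Kw Xw] /andP[_ hba].
  rewrite leNgt; apply/negP => cw.
  have := Kw (Sb t w) ltac:(by rewrite hba lexx).
  rewrite /e1 /e2 /c /c' cw /=.
  move: cw Xw; case: (Z w) => [r| |] //=.
  + by rewrite lte_fin ltry /= => hr _ h; lra.
Qed.

Lemma dir2 (F : nat -> set (set Omega)) (Sb Sa : nat -> Omega -> R) N
  (hF : is_filtration F N)
  (hpos : forall t, (t <= N)%N -> {ae P, forall w, 0 < Sb t w <= Sa t w})
  (H : forall t, (t < N)%N ->
     (exists Y, is_cond_ess_sup P (F t) (Sa t.+1) Y /\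
                {ae P, forall w, ((Sa t w)%:E <= Y w)%E}) /\
     (exists Z, is_cond_ess_inf P (F t) (Sb t.+1) Z /\
                {ae P, forall w, (Z w <= (Sb t w)%:E)%E})) :
  NA2 P F Sb Sa N.
Proof.
have hF' := hF; case: hF' => [sF [FM Fmono]].
move=> t tN eta [me1 me2] [xi [hxi [_ hN]]].
split; first by split.
pose S1 k w := (eta w).1 + \sum_(t <= u < k) (xi u w).1.
pose S2 k w := (eta w).2 + \sum_(t <= u < k) (xi u w).2.
have mS : forall k m, (t <= m)%N -> (m <= N)%N -> (k <= m.+1)%N ->
    Gmeas (F m) (S1 k) /\ Gmeas (F m) (S2 k).
  move=> k m tm mN km; have sFm := sF m mN.
  have Hu : forall u, (t <= u < k)%N -> Gmeas (F m) (fun w => (xi u w).1) /\ Gmeas (F m) (fun w => (xi u w).2).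
    move=> u /andP[tu uk]; have uN : (u <= N)%N by lia.
    have um : (u <= m)%N by lia.
    case: (hxi u tu uN) => [[g1 g2] _]; split; exact: (Gmeas_mono (Fmono u m um mN)).
  have FF := Fmono t m tm mN.
  split; apply/(GmeasP sFm); apply: measurable_funD; apply/(GmeasP sFm).
  - exact: (Gmeas_mono FF).
  - by apply: (sum_meas (f := fun u w => (xi u w).1) sFm) => u hu; case: (Hu u hu).
  - exact: (Gmeas_mono FF).
  - by apply: (sum_meas (f := fun u w => (xi u w).2) sFm) => u hu; case: (Hu u hu).
have main : forall j, (j <= N - t)%N ->
    {ae P, forall w, inK (Sb (N - j)%N w) (Sa (N - j)%N w) (S1 (N - j)%N.+1 w, S2 (N - j)%N.+1 w)}.
  elim => [_|j IH hj].
  - by rewrite subn0; exact: hN.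
  - set k := (N - j.+1)%N.
    have Ek : (N - j)%N = k.+1 by rewrite /k; lia.
    have tk : (t <= k)%N by rewrite /k; lia.
    have kN : (k < N)%N by rewrite /k; lia.
    have IH' := IH (ltnW hj); rewrite Ek in IH'.
    have Kk1 : {ae P, forall w, inK (Sb k.+1 w) (Sa k.+1 w) (S1 k.+1 w, S2 k.+1 w)}.
      case: (hxi k.+1 (leqW tk) kN) => _ Kx.
      apply: ae_mono2 IH' Kx => w h1 h2.
      have := inK_sub h1 h2.
      have E1 : S1 k.+2 w - (xi k.+1 w).1 = S1 k.+1 w.
        by rewrite /S1 big_nat_recr /= ?(leqW tk) //; lra.
      have E2 : S2 k.+2 w - (xi k.+1 w).2 = S2 k.+1 w.
        by rewrite /S2 big_nat_recr /= ?(leqW tk) //; lra.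
      by rewrite E1 E2.
    have [[Y [hY hYa]] [Z [hZ hZb]]] := H k kN.
    have h' : {ae P, forall w, Sb k.+1 w <= Sa k.+1 w}.
      by apply: ae_mono (hpos k.+1 kN) => w /andP[_ ->].
    have [m1 m2] := mS k.+1 k tk (ltnW kN) (leqnn _).
    exact: (one_step (sF k (ltnW kN)) hY hYa hZ hZb h' m1 m2 Kk1).
have := main (N - t)%N (leqnn _); rewrite subKn // => Kt.
have [_ Kx] := hxi t (leqnn t) tN.
apply: ae_mono2 Kt Kx => w h1 h2.
have := inK_sub h1 h2.
have E1 : S1 t.+1 w - (xi t w).1 = (eta w).1 by rewrite /S1 big_nat1; lra.
have E2 : S2 t.+1 w - (xi t w).2 = (eta w).2 by rewrite /S2 big_nat1; lra.
by rewrite E1 E2; case: (eta w).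
Qed.

End S2.

Unset Implicit Arguments.

Theorem theorem9p1 (d : measure_display) (Omega : measurableType d) (R : realType)
  (P : probability Omega R) (F : nat -> set (set Omega)) (N : nat)
  (Sb Sa : nat -> Omega -> R) :
  P_complete P ->
  is_filtration F N ->
  trivial_sigma P (F 0%N) ->
  (forall t, (t <= N)%N -> Gmeas (F t) (Sb t) /\ Gmeas (F t) (Sa t)) ->
  (forall t, (t <= N)%N -> {ae P, forall w, 0 < Sb t w <= Sa t w}) ->
  (NA2 P F Sb Sa N <->
   forall t, (t < N)%N ->
     (exists Y, is_cond_ess_sup P (F t) (Sa t.+1) Y /\
                {ae P, forall w, ((Sa t w)%:E <= Y w)%E}) /\
     (exists Z, is_cond_ess_inf P (F t) (Sb t.+1) Z /\
                {ae P, forall w, (Z w <= (Sb t w)%:E)%E})).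
Proof.
move=> _ hF _ hS hpos; split.
- by move=> NA t tN; exact: (dir1 hF hS hpos NA tN).
- exact: (dir2 hF hpos).
Qed.
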